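(* Let $M\ge3$, $\phi\in\mathrm{Hyp}^M$, $z_1\in\Sigma$, $A_1:=A(z_1)$, $\mu\ge1$, and let $K$ be sufficiently large (larger than some absolute constant). Let $h$ be the function from the preceding lemma, so that $\mathbf t(h(v,y),y)=v$ with $\mathbf t(z):=t^2_{z_1}(z_1,z)$. Define $$R_I:=\{z\in\Sigma:|t^2_{z_1}(z_1,z)|\le100\mu^{1/2}K^{-1}\},\qquad R_{II}:=\{z\in\Sigma:|A(z)-A_1|\le\mu^{1/2}K^{-3/4}\}.$$ Then $R_I$ is the union of the traces in $\Sigma$ of the curves $y\mapsto(h(v,y),y)$, $y\in[-1,1]$, with $|v|\le100\mu^{1/2}K^{-1}$; and if $z=(h(v,y),y)\in R_I\cap R_{II}$, then the tangent vector $X_z:=(h_y(v,y),1)$ satisfies $$|X_z-(-A_1,1)|\le3\mu^{1/2}K^{-3/4}.$$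
   Context: $\Sigma:=[-1,1]^2$, $2\Sigma:=[-2,2]^2$. $\mathrm{Hyp}^M$ ($M\ge3$) is the set of $\phi\in C^M(\Sigma)$ extending to a $C^M$ function on $2\Sigma$ with $\phi(0)=0$, $\nabla\phi(0)=0$, $D^2\phi(0)=\begin{pmatrix}0&1\\1&0\end{pmatrix}$, and $\sup_{2\Sigma}|\partial_x^a\partial_y^b\phi|\le10^{-5}$ for $3\le a+b\le M$. $H:=\phi_{xy}^2-\phi_{xx}\phi_{yy}$, $A:=\frac{\phi_{yy}}{\phi_{xy}+\sqrt H}$, and $t^2_{z_1}(z_1,z):=\phi_y(z)-\phi_y(z_1)-A(z_1)(\phi_x(z)-\phi_x(z_1))$. The preceding lemma provides $h:[\alpha,\beta]\times[-1,1]\to\mathbb R$ ($\alpha,\beta$ the min and max of $\mathbf t$ on $\Sigma$) with $\mathbf t(h(v,y),y)=v$, such that $(v,y)\mapsto(h(v,y),y)$ is a diffeomorphism onto a set containing $\Sigma$. *)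

(* Defs.v *)
From Stdlib Require Import Reals Lra List.
From Coquelicot Require Import Coquelicot.
Open Scope R_scope.

Definition Sigma (x y : R) : Prop := -1 <= x <= 1 /\ -1 <= y <= 1.
Definition Int2Sigma (x y : R) : Prop := -2 < x < 2 /\ -2 < y < 2.

Definition dX (f : R -> R -> R) : R -> R -> R := fun x y => Derive (fun u => f u y) x.
Definition dY (f : R -> R -> R) : R -> R -> R := fun x y => Derive (fun u => f x u) y.

(* iterated partial derivative along a word: true = d/dx, false = d/dy;
   the head of the word is applied last *)
Fixpoint dword (w : list bool) (f : R -> R -> R) : R -> R -> R :=
  match w with
  | nil => f
  | b :: w' => (if b then dX else dY) (dword w' f)
  end.

Definition pd (a b : nat) (f : R -> R -> R) : R -> R -> R :=
  dword (repeat true a ++ repeat false b) f.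

Definition unif_cont_on (D : R -> R -> Prop) (f : R -> R -> R) : Prop :=
  forall eps, 0 < eps -> exists delta, 0 < delta /\
    forall x y u w, D x y -> D u w -> Rabs (u - x) < delta -> Rabs (w - y) < delta ->
      Rabs (f u w - f x y) < eps.

Definition cont_within2 (D : R -> R -> Prop) (f : R -> R -> R) (x y : R) : Prop :=
  forall eps, 0 < eps -> exists delta, 0 < delta /\
    forall u w, D u w -> Rabs (u - x) < delta -> Rabs (w - y) < delta ->
      Rabs (f u w - f x y) < eps.

Definition has_deriv_within (D : R -> Prop) (f : R -> R) (x l : R) : Prop :=
  forall eps, 0 < eps -> exists delta, 0 < delta /\
    forall u, D u -> Rabs (u - x) < delta ->
      Rabs (f u - f x - l * (u - x)) <= eps * Rabs (u - x).

(* C^M on the closed square 2Sigma: all partial derivatives of order <= M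
   exist on the interior (-2,2)^2 and extend continuously to the closed square
   (equivalently, are uniformly continuous on the bounded open square). *)
Definition CM_2Sigma (M : nat) (f : R -> R -> R) : Prop :=
  (forall w : list bool, (length w < M)%nat -> forall x y, Int2Sigma x y ->
      ex_derive (fun u => dword w f u y) x /\ ex_derive (fun u => dword w f x u) y) /\
  (forall w : list bool, (length w <= M)%nat -> unif_cont_on Int2Sigma (dword w f)).

Definition Hyp (M : nat) (phi : R -> R -> R) : Prop :=
  CM_2Sigma M phi /\
  phi 0 0 = 0 /\ dX phi 0 0 = 0 /\ dY phi 0 0 = 0 /\
  dX (dX phi) 0 0 = 0 /\ dX (dY phi) 0 0 = 1 /\
  dY (dX phi) 0 0 = 1 /\ dY (dY phi) 0 0 = 0 /\
  (forall a b : nat, (3 <= a + b)%nat -> (a + b <= M)%nat ->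
     forall x y, Int2Sigma x y -> Rabs (pd a b phi x y) <= 1 / 100000).

Definition phi_x (phi : R -> R -> R) := dX phi.
Definition phi_y (phi : R -> R -> R) := dY phi.
Definition phi_xx (phi : R -> R -> R) := dX (dX phi).
Definition phi_yy (phi : R -> R -> R) := dY (dY phi).
Definition phi_xy (phi : R -> R -> R) := dX (dY phi).

Definition Hfun (phi : R -> R -> R) (x y : R) : R :=
  (phi_xy phi x y) ^ 2 - phi_xx phi x y * phi_yy phi x y.

Definition Afun (phi : R -> R -> R) (x y : R) : R :=
  phi_yy phi x y / (phi_xy phi x y + sqrt (Hfun phi x y)).

Definition t2 (phi : R -> R -> R) (x1 y1 x y : R) : R :=
  phi_y phi x y - phi_y phi x1 y1 - Afun phi x1 y1 * (phi_x phi x y - phi_x phi x1 y1).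

Definition Rect (alpha beta v y : R) : Prop := alpha <= v <= beta /\ -1 <= y <= 1.

(* The conclusions of the preceding lemma about h (with hy its partial
   derivative in y): t(h(v,y),y) = v, and (v,y) |-> (h(v,y),y) is a C^1
   diffeomorphism of [alpha,beta]x[-1,1] onto a set containing Sigma. *)
Definition lemma_h (phi : R -> R -> R) (x1 y1 alpha beta : R) (h hy : R -> R -> R) : Prop :=
  (forall v y, Rect alpha beta v y -> t2 phi x1 y1 (h v y) y = v) /\
  (forall v y v' y', Rect alpha beta v y -> Rect alpha beta v' y' ->
      h v y = h v' y' -> y = y' -> v = v') /\
  (forall x y, Sigma x y -> exists v, alpha <= v <= beta /\ h v y = x) /\
  (exists hv : R -> R -> R,
     (forall v y, Rect alpha beta v y ->
        has_deriv_within (fun u => alpha <= u <= beta) (fun u => h u y) v (hv v y) /\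
        has_deriv_within (fun u => -1 <= u <= 1) (fun u => h v u) y (hy v y) /\
        cont_within2 (Rect alpha beta) hv v y /\
        cont_within2 (Rect alpha beta) hy v y /\
        hv v y <> 0)).

(* Main.v *)
Require Import Defs.
From Stdlib Require Import Reals Lra Lia List.
From Coquelicot Require Import Coquelicot.
Open Scope R_scope.


Lemma mvt_bound (f df : R -> R) a b B :
  (forall t, Rmin a b <= t <= Rmax a b -> is_derive f t (df t)) ->
  (forall t, Rmin a b <= t <= Rmax a b -> Rabs (df t) <= B) ->
  Rabs (f b - f a) <= B * Rabs (b - a).
Proof.
intros Hd Hb.
destruct (MVT_gen f a b df) as [c [Hc Heq]].
- intros t Ht; apply Hd; lra.
- intros t Ht. apply continuity_pt_filterlim. apply (ex_derive_continuous (K:=R_AbsRing) (V:=R_NormedModule)).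
  eexists; apply Hd; exact Ht.
- rewrite Heq, Rabs_mult. apply Rmult_le_compat_r. apply Rabs_pos. apply Hb; exact Hc.
Qed.

Lemma int_open x y : Int2Sigma x y -> exists d, 0 < d /\
  forall u v, Rabs (u - x) < d -> Rabs (v - y) < d -> Int2Sigma u v.
Proof.
unfold Int2Sigma; intros [Hx Hy].
exists (Rmin (Rmin (2 - x) (x + 2)) (Rmin (2 - y) (y + 2))).
split.
- repeat apply Rmin_glb_lt; lra.
- intros u v Hu Hv.
  pose proof (Rmin_l (Rmin (2 - x) (x + 2)) (Rmin (2 - y) (y + 2))).
  pose proof (Rmin_r (Rmin (2 - x) (x + 2)) (Rmin (2 - y) (y + 2))).
  pose proof (Rmin_l (2 - x) (x + 2)). pose proof (Rmin_r (2 - x) (x + 2)).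
  pose proof (Rmin_l (2 - y) (y + 2)). pose proof (Rmin_r (2 - y) (y + 2)).
  apply Rabs_def2 in Hu; apply Rabs_def2 in Hv. lra.
Qed.

Lemma sigma_int x y : Sigma x y -> Int2Sigma x y.
Proof. unfold Sigma, Int2Sigma; lra. Qed.

Lemma is_derive_eps f x l : is_derive f x l -> forall eps, 0 < eps -> exists d, 0 < d /\
  forall u, Rabs (u - x) < d -> Rabs (f u - f x - l * (u - x)) <= eps * Rabs (u - x).
Proof.
intros H eps He. apply is_derive_Reals in H.
destruct (H eps He) as [d Hd]. exists d; split. apply cond_pos.
intros u Hu. destruct (Req_dec u x) as [->|Hne].
- replace (f x - f x - l * (x - x)) with 0 by ring. replace (x - x) with 0 by ring. rewrite Rabs_R0; lra.
- assert (Hh : u - x <> 0) by lra.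
  specialize (Hd (u - x) Hh Hu). replace (x + (u - x)) with u in Hd by ring.
  replace (f u - f x - l * (u - x)) with (((f u - f x) / (u - x) - l) * (u - x)) by (field; auto).
  rewrite Rabs_mult. apply Rmult_le_compat_r. apply Rabs_pos. lra.
Qed.

Lemma abs_le2' x a : Rabs x <= a -> -a <= x <= a.
Proof. unfold Rabs; destruct (Rcase_abs x); lra. Qed.

Lemma between_abs0 a b t : Rmin a b <= t <= Rmax a b -> Rabs (t - a) <= Rabs (b - a).
Proof.
intros Ht. destruct (Rle_dec a b).
- rewrite Rmin_left, Rmax_right in Ht by lra. rewrite !Rabs_right; lra.
- rewrite Rmin_right, Rmax_left in Ht by lra. rewrite !Rabs_left1; lra.
Qed.


Lemma between_abs a b t : Rmin a b <= t <= Rmax a b -> Rabs (t - a) <= Rabs (b - a).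
Proof.
intros Ht. destruct (Rle_dec a b).
- rewrite Rmin_left, Rmax_right in Ht by lra. rewrite !Rabs_right; lra.
- rewrite Rmin_right, Rmax_left in Ht by lra. rewrite !Rabs_left1; lra.
Qed.

Lemma implicit_deriv (F Fx : R->R->R) (g : R->R) (x0 y fx fy hy0 v d0 : R):
  (forall u, -1<=u<=1 -> F (g u) u = v) ->
  -1 <= y <= 1 -> g y = x0 ->
  has_deriv_within (fun u => -1<=u<=1) g y hy0 ->
  0 < d0 ->
  (forall x u, Rabs (x-x0) < d0 -> Rabs (u-y) < d0 -> is_derive (fun t => F t u) x (Fx x u)) ->
  (forall eps, 0<eps -> exists d, 0<d /\ forall x u, Rabs(x-x0)<d -> Rabs(u-y)<d -> Rabs (Fx x u - fx) < eps) ->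
  is_derive (fun u => F x0 u) y fy ->
  fx * hy0 + fy = 0.
Proof.
intros Hid Hy Hgy Hg Hd0 HFx HC Hfy.
set (D := fx * hy0 + fy).
destruct (Req_dec D 0) as [HD|HD]; [exact HD| exfalso].
assert (HaD : 0 < Rabs D) by (apply Rabs_pos_lt; exact HD).
set (Kc := Rabs fx + Rabs hy0 + 2).
assert (HK : 2 <= Kc) by (unfold Kc; pose proof (Rabs_pos fx); pose proof (Rabs_pos hy0); lra).
set (eps := Rmin 1 (Rabs D / (2 * Kc))).
assert (He : 0 < eps). { unfold eps; apply Rmin_glb_lt; [lra|]. apply Rdiv_lt_0_compat; lra. }
assert (He1 : eps <= 1) by apply Rmin_l.
assert (HeK : eps * Kc <= Rabs D / 2).
{ assert (eps <= Rabs D / (2 * Kc)) by apply Rmin_r.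
  apply Rmult_le_compat_r with (r := Kc) in H; [|lra].
  replace (Rabs D / (2 * Kc) * Kc) with (Rabs D / 2) in H by (field; lra). exact H. }
destruct (Hg eps He) as [dg [Hdg Hg']].
destruct (HC eps He) as [dc [Hdc HC']].
destruct (is_derive_eps _ _ _ Hfy eps He) as [dy [Hdy Hfy']].
set (Kh := Rabs hy0 + 2).
assert (HKh : 2 <= Kh) by (unfold Kh; pose proof (Rabs_pos hy0); lra).
set (dl := Rmin (Rmin (Rmin dg dy) (Rmin (d0 / Kh) (dc / Kh))) (Rmin (Rmin d0 dc) 1)).
assert (Hdl : 0 < dl).
{ unfold dl. repeat apply Rmin_glb_lt; try lra; apply Rdiv_lt_0_compat; lra. }
assert (Hdl1 : dl <= dg /\ dl <= dy /\ dl * Kh <= d0 /\ dl * Kh <= dc /\ dl <= d0 /\ dl <= dc /\ dl <= 1).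
{ unfold dl.
  pose proof (Rmin_l (Rmin (Rmin dg dy) (Rmin (d0 / Kh) (dc / Kh))) (Rmin (Rmin d0 dc) 1)).
  pose proof (Rmin_r (Rmin (Rmin dg dy) (Rmin (d0 / Kh) (dc / Kh))) (Rmin (Rmin d0 dc) 1)).
  pose proof (Rmin_l (Rmin dg dy) (Rmin (d0 / Kh) (dc / Kh))).
  pose proof (Rmin_r (Rmin dg dy) (Rmin (d0 / Kh) (dc / Kh))).
  pose proof (Rmin_l dg dy). pose proof (Rmin_r dg dy).
  pose proof (Rmin_l (d0 / Kh) (dc / Kh)). pose proof (Rmin_r (d0 / Kh) (dc / Kh)).
  pose proof (Rmin_l d0 dc). pose proof (Rmin_r d0 dc). pose proof (Rmin_l (Rmin d0 dc) 1).
  pose proof (Rmin_r (Rmin d0 dc) 1).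
  set (m := Rmin (Rmin (Rmin dg dy) (Rmin (d0 / Kh) (dc / Kh))) (Rmin (Rmin d0 dc) 1)) in *.
  assert (m * Kh <= d0 / Kh * Kh) by (apply Rmult_le_compat_r; lra).
  assert (m * Kh <= dc / Kh * Kh) by (apply Rmult_le_compat_r; lra).
  replace (d0 / Kh * Kh) with d0 in * by (field; lra).
  replace (dc / Kh * Kh) with dc in * by (field; lra).
  lra. }
destruct Hdl1 as [H1 [H2 [H3 [H4 [H5 [H6 H7]]]]]].
set (s := if Rle_dec 0 y then - (dl / 2) else dl / 2).
set (u := y + s).
assert (Hs : Rabs s = dl / 2 /\ -1 <= u <= 1).
{ unfold u, s; destruct (Rle_dec 0 y).
  - split; [rewrite Rabs_Ropp, Rabs_right; lra| lra].
  - split; [rewrite Rabs_right; lra| lra]. }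
destruct Hs as [Hs Hu].
assert (Hus : u - y = s) by (unfold u; ring).
assert (Hsd : Rabs (u - y) < dl) by (rewrite Hus; lra).
specialize (Hg' u Hu (Rlt_le_trans _ _ _ Hsd H1)).
rewrite Hgy in Hg'.
set (G := g u - x0) in *.
assert (HG : Rabs G <= (Rabs hy0 + 1) * Rabs s).
{ rewrite Hus in Hg'.
  replace G with ((G - hy0 * s) + hy0 * s) by ring.
  eapply Rle_trans; [apply Rabs_triang|]. rewrite Rabs_mult.
  pose proof (Rabs_pos s). assert (eps * Rabs s <= Rabs s) by nra. lra. }
assert (HGd : Rabs G < dl * Kh).
{ unfold Kh. pose proof (Rabs_pos hy0). nra. }
destruct (MVT_gen (fun t => F t u) x0 (g u) (fun t => Fx t u)) as [xi [Hxi Hmvt]].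
- intros t Ht. apply HFx; [|lra].
  pose proof (between_abs _ _ _ (conj (Rlt_le _ _ (proj1 Ht)) (Rlt_le _ _ (proj2 Ht)))). unfold G in HGd; lra.
- intros t Ht. apply continuity_pt_filterlim.
  apply (ex_derive_continuous (K:=R_AbsRing) (V:=R_NormedModule) (fun t => F t u) t).
  eexists; apply HFx; [|lra].
  pose proof (between_abs _ _ _ Ht). unfold G in HGd; lra.
- assert (Hxi2 : Rabs (xi - x0) < dc).
  { pose proof (between_abs _ _ _ Hxi). unfold G in HGd; lra. }
  specialize (HC' xi u Hxi2 (Rlt_le_trans _ _ _ Hsd H6)).
  specialize (Hfy' u (Rlt_le_trans _ _ _ Hsd H2)).
  rewrite Hus in Hfy'.
  rewrite Hid in Hmvt by exact Hu.
  assert (Hv : F x0 y = v) by (rewrite <- Hgy; apply Hid; exact Hy).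
  fold G in Hmvt.
  set (e := Fx xi u - fx) in *.
  set (r1 := G - hy0 * s) in *.
  set (r2 := F x0 u - F x0 y - fy * s) in *.
  assert (Heq : D * s = - (fx * r1 + e * G + r2)).
  { unfold D, r1, r2, e. replace (Fx xi u) with (Fx xi u) in Hmvt by reflexivity. nra. }
  assert (Hb : Rabs D * Rabs s <= Rabs fx * Rabs r1 + Rabs e * Rabs G + Rabs r2).
  { rewrite <- Rabs_mult, Heq, Rabs_Ropp.
    pose proof (Rabs_triang (fx*r1 + e*G) r2) as T1. pose proof (Rabs_triang (fx*r1) (e*G)) as T2.
    rewrite 2 Rabs_mult in T2. lra. }
  assert (Hs0 : 0 < Rabs s) by lra.
  assert (Hr1 : Rabs r1 <= eps * Rabs s) by (rewrite Hus in Hg'; exact Hg').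
  assert (Hfxr : Rabs fx * Rabs r1 <= Rabs fx * (eps * Rabs s)) by (apply Rmult_le_compat_l; [apply Rabs_pos|exact Hr1]).
  assert (HeG : Rabs e * Rabs G <= eps * ((Rabs hy0 + 1) * Rabs s)).
  { apply Rmult_le_compat; try apply Rabs_pos; lra. }
  assert (Rabs D * Rabs s <= eps * Kc * Rabs s) by (unfold Kc; nra).
  nra.
Qed.


Lemma abs_le2 x a : Rabs x <= a -> -a <= x <= a.
Proof. unfold Rabs; destruct (Rcase_abs x); lra. Qed.

Lemma root_bound (pxx pxy pyy : R) :
  Rabs pxx <= 2/100000 -> Rabs (pxy - 1) <= 2/100000 -> Rabs pyy <= 2/100000 ->
  let A := pyy / (pxy + sqrt (pxy ^ 2 - pxx * pyy)) in
  Rabs A <= 3/100000 /\ pxx * A ^ 2 - 2 * pxy * A + pyy = 0.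
Proof.
intros Hxx Hxy Hyy A.
apply abs_le2 in Hxx; apply abs_le2 in Hxy; apply abs_le2 in Hyy.
assert (HH : 0 <= pxy ^ 2 - pxx * pyy) by nra.
set (s := sqrt (pxy ^ 2 - pxx * pyy)) in *.
assert (Hs0 : 0 <= s) by apply sqrt_pos.
assert (Hs2 : s * s = pxy ^ 2 - pxx * pyy) by (apply sqrt_sqrt; exact HH).
set (den := pxy + s) in *.
assert (Hden : 1 - 2/100000 <= den) by (unfold den; lra).
split.
- assert (HAd : A * den = pyy) by (unfold A; field; lra).
  apply Rabs_le; split; nra.
- unfold A.
  replace (pxx * (pyy / den) ^ 2 - 2 * pxy * (pyy / den) + pyy)
    with (pyy / den ^ 2 * (pxx * pyy - 2 * pxy * den + den ^ 2)) by (field; lra).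
  replace (pxx * pyy - 2 * pxy * den + den ^ 2) with 0 by (unfold den; nra). ring.
Qed.

Lemma final_alg (pxx pxy pyy qxx qxy qyy hy0 S : R) :
  Rabs pxx <= 2/100000 -> Rabs (pxy - 1) <= 2/100000 -> Rabs pyy <= 2/100000 ->
  Rabs qxx <= 2/100000 -> Rabs (qxy - 1) <= 2/100000 -> Rabs qyy <= 2/100000 ->
  (pxy - qyy / (qxy + sqrt (qxy ^ 2 - qxx * qyy)) * pxx) * hy0
    + (pyy - qyy / (qxy + sqrt (qxy ^ 2 - qxx * qyy)) * pxy) = 0 ->
  Rabs (pyy / (pxy + sqrt (pxy ^ 2 - pxx * pyy)) - qyy / (qxy + sqrt (qxy ^ 2 - qxx * qyy))) <= S ->
  Rabs (hy0 - - (qyy / (qxy + sqrt (qxy ^ 2 - qxx * qyy)))) <= 3 * S.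
Proof.
intros H1 H2 H3 H4 H5 H6 Heq HS.
destruct (root_bound pxx pxy pyy H1 H2 H3) as [HA HqA].
destruct (root_bound qxx qxy qyy H4 H5 H6) as [HA1 _].
set (A := pyy / (pxy + sqrt (pxy ^ 2 - pxx * pyy))) in *.
set (A1 := qyy / (qxy + sqrt (qxy ^ 2 - qxx * qyy))) in *.
set (E := hy0 - - A1).
set (Fx := pxy - A1 * pxx) in *.
assert (HFE : Fx * E = - ((A1 - A) * (pxx * (A1 + A) - 2 * pxy))).
{ assert (HF : Fx * hy0 = - (pyy - A1 * pxy)) by lra.
  transitivity (Fx * hy0 + Fx * A1); [unfold E; ring|]. rewrite HF. unfold Fx.
  clearbody A A1. lra. }
apply abs_le2 in H1; apply abs_le2 in H2; apply abs_le2 in HA; apply abs_le2 in HA1.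
assert (HFx : 9/10 <= Fx) by (unfold Fx; nra).
assert (Hm : Rabs (pxx * (A1 + A) - 2 * pxy) <= 21/10) by (apply Rabs_le; nra).
assert (Habs : Fx * Rabs E = Rabs (A1 - A) * Rabs (pxx * (A1 + A) - 2 * pxy)).
{ rewrite <- (Rabs_right Fx) by lra. rewrite <- !Rabs_mult, HFE, Rabs_Ropp. reflexivity. }
assert (Rabs (A1 - A) <= S) by (rewrite Rabs_minus_sym; exact HS).
pose proof (Rabs_pos E). pose proof (Rabs_pos (A1 - A)).
pose proof (Rabs_pos (pxx * (A1 + A) - 2 * pxy)).
assert (Fx * Rabs E <= S * (21/10)) by (rewrite Habs; apply Rmult_le_compat; lra).
nra.
Qed.


Section PhiSec.
Variable M : nat.
Variable phi : R -> R -> R.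
Hypothesis HM : (3 <= M)%nat.
Hypothesis HH : Hyp M phi.

Lemma HD w : (length w <= 2)%nat -> forall x y, Int2Sigma x y ->
  ex_derive (fun u => dword w phi u y) x /\ ex_derive (fun u => dword w phi x u) y.
Proof. intros Hw. destruct HH as [[H1 _] _]. apply H1. lia. Qed.

Lemma HCont w : (length w <= 3)%nat -> forall x y, Int2Sigma x y ->
  forall eps, 0 < eps -> exists d, 0 < d /\ forall u v, Rabs (u - x) < d -> Rabs (v - y) < d ->
    Int2Sigma u v /\ Rabs (dword w phi u v - dword w phi x y) < eps.
Proof.
intros Hw x y Hxy eps He. destruct HH as [[_ H2] _].
destruct (H2 w ltac:(lia) eps He) as [d1 [Hd1 H]].
destruct (int_open x y Hxy) as [d2 [Hd2 Ho]].
exists (Rmin d1 d2). split. apply Rmin_glb_lt; lra.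
intros u v Hu Hv. pose proof (Rmin_l d1 d2). pose proof (Rmin_r d1 d2).
assert (Huv : Int2Sigma u v) by (apply Ho; lra).
split; [exact Huv|]. apply H; auto; lra.
Qed.

Lemma HCont2d w : (length w <= 3)%nat -> forall x y, Int2Sigma x y ->
  continuity_2d_pt (dword w phi) x y.
Proof.
intros Hw x y Hxy eps. destruct (HCont w Hw x y Hxy eps (cond_pos eps)) as [d [Hd H]].
exists (mkposreal d Hd). intros u v Hu Hv. apply H; auto.
Qed.

Lemma Schw w : (length w <= 1)%nat -> forall x y, Int2Sigma x y ->
  dX (dY (dword w phi)) x y = dY (dX (dword w phi)) x y.
Proof.
intros Hw x y Hxy. unfold dX, dY.
apply (Schwarz (dword w phi) x y).
- destruct (int_open x y Hxy) as [d [Hd Ho]].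
  exists (mkposreal d Hd). intros u v Hu Hv. simpl in Hu, Hv.
  assert (Huv : Int2Sigma u v) by (apply Ho; auto).
  split; [apply (HD w ltac:(lia) u v Huv)|].
  split; [apply (HD w ltac:(lia) u v Huv)|].
  split; [apply (HD (false :: w) ltac:(simpl; lia) u v Huv)|].
  apply (HD (true :: w) ltac:(simpl; lia) u v Huv).
- apply (HCont2d (true :: false :: w) ltac:(simpl; lia) x y Hxy).
- apply (HCont2d (false :: true :: w) ltac:(simpl; lia) x y Hxy).
Qed.

Definition c5 := 1 / 100000.

Lemma Hpd a b : (a + b = 3)%nat -> forall x y, Int2Sigma x y -> Rabs (pd a b phi x y) <= c5.
Proof.
intros Hab x y Hxy. destruct HH as [_ [_ [_ [_ [_ [_ [_ [_ H]]]]]]]].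
apply H; auto; lia.
Qed.

Lemma path_bound (f fx fy : R -> R -> R) B :
  (forall x y, Int2Sigma x y -> is_derive (fun u => f u y) x (fx x y)) ->
  (forall x y, Int2Sigma x y -> is_derive (fun u => f x u) y (fy x y)) ->
  (forall x y, Int2Sigma x y -> Rabs (fx x y) <= B) ->
  (forall x y, Int2Sigma x y -> Rabs (fy x y) <= B) ->
  forall x y, Sigma x y -> Rabs (f x y - f 0 0) <= 2 * B.
Proof.
intros Hfx Hfy Bx By x y [Hx Hy].
assert (Hx0 : Rabs (x - 0) <= 1) by (apply Rabs_le; lra).
assert (Hy0 : Rabs (y - 0) <= 1) by (apply Rabs_le; lra).
assert (Ha : Rabs (f x y - f x 0) <= B * Rabs (y - 0)).
{ apply (mvt_bound (fun u => f x u) (fun u => fy x u) 0 y B).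
  - intros t Ht. apply Hfy. pose proof (between_abs0 0 y t Ht). unfold Int2Sigma.
    apply abs_le2' in H. lra.
  - intros t Ht. apply By. pose proof (between_abs0 0 y t Ht). unfold Int2Sigma.
    apply abs_le2' in H. lra. }
assert (Hb : Rabs (f x 0 - f 0 0) <= B * Rabs (x - 0)).
{ apply (mvt_bound (fun u => f u 0) (fun u => fx u 0) 0 x B).
  - intros t Ht. apply Hfx. pose proof (between_abs0 0 x t Ht). unfold Int2Sigma.
    apply abs_le2' in H. lra.
  - intros t Ht. apply Bx. pose proof (between_abs0 0 x t Ht). unfold Int2Sigma.
    apply abs_le2' in H. lra. }
assert (HB : 0 <= B).
{ eapply Rle_trans; [apply Rabs_pos| apply (Bx 0 0)]. unfold Int2Sigma; lra. }
replace (f x y - f 0 0) with ((f x y - f x 0) + (f x 0 - f 0 0)) by ring.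
eapply Rle_trans; [apply Rabs_triang|].
replace (y - 0) with y in Ha by ring. replace (x - 0) with x in Hb by ring.
assert (Rabs x <= 1) by (apply Rabs_le; lra).
assert (Rabs y <= 1) by (apply Rabs_le; lra).
nra.
Qed.

Lemma isd_x w : (length w <= 2)%nat -> forall x y, Int2Sigma x y ->
  is_derive (fun u => dword w phi u y) x (dword (true :: w) phi x y).
Proof. intros Hw x y H. apply Derive_correct. apply (HD w Hw x y H). Qed.

Lemma isd_y w : (length w <= 2)%nat -> forall x y, Int2Sigma x y ->
  is_derive (fun u => dword w phi x u) y (dword (false :: w) phi x y).
Proof. intros Hw x y H. apply Derive_correct. apply (HD w Hw x y H). Qed.

Lemma phi00 : phi_yy phi 0 0 = 0 /\ phi_xy phi 0 0 = 1 /\ phi_xx phi 0 0 = 0.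
Proof. destruct HH as [_ [_ [_ [_ [Hxx [Hxy [_ [Hyy _]]]]]]]]. unfold phi_yy, phi_xy, phi_xx. auto. Qed.

Lemma bound_yy x y : Sigma x y -> Rabs (phi_yy phi x y) <= 2 * c5.
Proof.
intros Hs.
pose proof (path_bound (dword (false :: false :: nil) phi) (dword (true :: false :: false :: nil) phi)
  (dword (false :: false :: false :: nil) phi) c5) as P.
destruct phi00 as [H0 _]. unfold phi_yy in *. simpl in P.
rewrite H0 in P. replace (dY (dY phi) x y) with (dY (dY phi) x y - 0) by ring. apply P; auto.
- intros; apply (isd_x (false :: false :: nil)); simpl; auto.
- intros; apply (isd_y (false :: false :: nil)); simpl; auto.
- intros; exact (Hpd 1 2 eq_refl x0 y0 H).
- intros; exact (Hpd 0 3 eq_refl x0 y0 H).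
Qed.

Lemma bound_xy x y : Sigma x y -> Rabs (phi_xy phi x y - 1) <= 2 * c5.
Proof.
intros Hs.
pose proof (path_bound (dword (true :: false :: nil) phi) (dword (true :: true :: false :: nil) phi)
  (dword (false :: true :: false :: nil) phi) c5) as P.
destruct phi00 as [_ [H0 _]]. unfold phi_xy in *. simpl in P.
rewrite H0 in P. apply P; auto.
- intros; apply (isd_x (true :: false :: nil)); simpl; auto.
- intros; apply (isd_y (true :: false :: nil)); simpl; auto.
- intros; exact (Hpd 2 1 eq_refl x0 y0 H).
- intros. change (dword (false :: true :: false :: nil) phi x0 y0) with
    (dY (dX (dword (false :: nil) phi)) x0 y0).
  pose proof (Schw (false :: nil) ltac:(simpl; lia) x0 y0 H) as E. simpl in E |- *. rewrite <- E.
  exact (Hpd 1 2 eq_refl x0 y0 H).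
Qed.

Lemma bound_xx x y : Sigma x y -> Rabs (phi_xx phi x y) <= 2 * c5.
Proof.
intros Hs.
pose proof (path_bound (dword (true :: true :: nil) phi) (dword (true :: true :: true :: nil) phi)
  (dword (false :: true :: true :: nil) phi) c5) as P.
destruct phi00 as [_ [_ H0]]. unfold phi_xx in *. simpl in P.
rewrite H0 in P. replace (dX (dX phi) x y) with (dX (dX phi) x y - 0) by ring. apply P; auto.
- intros; apply (isd_x (true :: true :: nil)); simpl; auto.
- intros; apply (isd_y (true :: true :: nil)); simpl; auto.
- intros; exact (Hpd 3 0 eq_refl x0 y0 H).
- intros. change (dword (false :: true :: true :: nil) phi x0 y0) with
    (dY (dX (dword (true :: nil) phi)) x0 y0).
  pose proof (Schw (true :: nil) ltac:(simpl; lia) x0 y0 H) as E. simpl in E |- *. rewrite <- E.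
  replace (dX (dY (dX phi)) x0 y0) with (pd 2 1 phi x0 y0).
  + exact (Hpd 2 1 eq_refl x0 y0 H).
  + change (Derive (fun s => dX (dY phi) s y0) x0 = Derive (fun s => dY (dX phi) s y0) x0).
    apply Derive_ext_loc.
    destruct (int_open x0 y0 H) as [d [Hd Ho]].
    exists (mkposreal d Hd). intros t Ht.
    assert (Ht' : Rabs (t - x0) < d) by exact Ht.
    assert (Hi : Int2Sigma t y0) by (apply Ho; auto; rewrite Rminus_diag, Rabs_R0; lra).
    exact (Schw nil ltac:(simpl; lia) t y0 Hi).
Qed.

End PhiSec.


Lemma isd_combo (f g : R -> R) x a b C0 C1 A1 : is_derive f x a -> is_derive g x b ->
  is_derive (fun t => f t - C0 - A1 * (g t - C1)) x (a - A1 * b).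
Proof.
intros Hf Hg. auto_derive.
- split; [eexists; exact Hf| split; [eexists; exact Hg|auto]].
- rewrite (is_derive_unique (fun x0 : R => f x0) x a Hf), (is_derive_unique (fun x0 : R => g x0) x b Hg). ring.
Qed.

Theorem mainTheorem11 :
  exists K0 : R,
  forall (M : nat) (phi : R -> R -> R) (x1 y1 mu K alpha beta : R) (h hy : R -> R -> R),
    (3 <= M)%nat ->
    Hyp M phi ->
    Sigma x1 y1 ->
    1 <= mu ->
    K0 <= K ->
    (exists x y, Sigma x y /\ t2 phi x1 y1 x y = alpha) ->
    (forall x y, Sigma x y -> alpha <= t2 phi x1 y1 x y) ->
    (exists x y, Sigma x y /\ t2 phi x1 y1 x y = beta) ->
    (forall x y, Sigma x y -> t2 phi x1 y1 x y <= beta) ->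
    lemma_h phi x1 y1 alpha beta h hy ->
    (forall x y,
       (Sigma x y /\ Rabs (t2 phi x1 y1 x y) <= 100 * sqrt mu / K)
       <->
       (exists v, alpha <= v <= beta /\ Rabs v <= 100 * sqrt mu / K /\
                  Sigma x y /\ x = h v y))
    /\
    (forall v y, alpha <= v <= beta -> -1 <= y <= 1 ->
       (Sigma (h v y) y /\ Rabs (t2 phi x1 y1 (h v y) y) <= 100 * sqrt mu / K) ->
       (Sigma (h v y) y /\
          Rabs (Afun phi (h v y) y - Afun phi x1 y1) <= sqrt mu * Rpower K (-3/4)) ->
       sqrt ((hy v y - (- Afun phi x1 y1)) ^ 2 + (1 - 1) ^ 2)
         <= 3 * sqrt mu * Rpower K (-3/4)).
Proof.
exists 1.
intros M phi x1 y1 mu K alpha beta h hy HM HH Hz1 Hmu HK _ Hal _ Hbe Hlem.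
destruct Hlem as [Ht [Hinj [Hsurj [hv Hhv]]]].
split.
- intros x y; split.
  + intros [Hs Hb]. destruct (Hsurj x y Hs) as [v [Hv Hhx]].
    assert (Hr : Rect alpha beta v y) by (split; [exact Hv| destruct Hs; lra]).
    pose proof (Ht v y Hr) as E. rewrite Hhx in E.
    exists v. split; [exact Hv|]. split; [rewrite <- E; exact Hb|]. split; [exact Hs| auto].
  + intros [v [Hv [Hb [Hs Hx]]]]. split; [exact Hs|]. subst x.
    assert (Hr : Rect alpha beta v y) by (split; [exact Hv| destruct Hs; lra]).
    rewrite (Ht v y Hr). exact Hb.
- intros v y Hv Hy [Hs Hb] [_ HA].
  set (x0 := h v y) in *.
  destruct (int_open x0 y (sigma_int _ _ Hs)) as [d0 [Hd0 Ho]].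
  set (A1 := Afun phi x1 y1) in *.
  assert (Himp : (phi_xy phi x0 y - A1 * phi_xx phi x0 y) * hy v y
                 + (phi_yy phi x0 y - A1 * phi_xy phi x0 y) = 0).
  { apply (implicit_deriv (t2 phi x1 y1) (fun x u => phi_xy phi x u - A1 * phi_xx phi x u)
             (h v) x0 y _ _ (hy v y) v d0).
    - intros u Hu. apply Ht. split; auto.
    - exact Hy.
    - reflexivity.
    - destruct (Hhv v y (conj Hv Hy)) as [_ [H _]]. exact H.
    - exact Hd0.
    - intros x u Hx Hu. assert (Hi : Int2Sigma x u) by (apply Ho; auto).
      unfold t2. apply isd_combo.
      + exact (isd_x M phi HM HH (false :: nil) ltac:(simpl; lia) x u Hi).
      + exact (isd_x M phi HM HH (true :: nil) ltac:(simpl; lia) x u Hi).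
    - intros eps He.
      assert (He1 : 0 < eps / 2) by lra.
      assert (He2 : 0 < eps / (2 * (Rabs A1 + 1))) by (apply Rdiv_lt_0_compat; [lra|]; pose proof (Rabs_pos A1); lra).
      destruct (HCont M phi HM HH (true :: false :: nil) ltac:(simpl; lia) x0 y (sigma_int _ _ Hs) _ He1)
        as [d1 [Hd1 H1]].
      destruct (HCont M phi HM HH (true :: true :: nil) ltac:(simpl; lia) x0 y (sigma_int _ _ Hs) _ He2)
        as [d2 [Hd2 H2]].
      exists (Rmin d1 d2). split; [apply Rmin_glb_lt; lra|].
      intros x u Hx Hu. pose proof (Rmin_l d1 d2). pose proof (Rmin_r d1 d2).
      destruct (H1 x u ltac:(lra) ltac:(lra)) as [_ B1].
      destruct (H2 x u ltac:(lra) ltac:(lra)) as [_ B2].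
      simpl in B1, B2. unfold phi_xy, phi_xx.
      replace (dX (dY phi) x u - A1 * dX (dX phi) x u - (dX (dY phi) x0 y - A1 * dX (dX phi) x0 y))
        with ((dX (dY phi) x u - dX (dY phi) x0 y) - A1 * (dX (dX phi) x u - dX (dX phi) x0 y)) by ring.
      eapply Rle_lt_trans; [apply Rabs_triang|]. rewrite Rabs_Ropp, Rabs_mult.
      assert (Rabs A1 * Rabs (dX (dX phi) x u - dX (dX phi) x0 y) <= Rabs A1 * (eps / (2 * (Rabs A1 + 1)))).
      { apply Rmult_le_compat_l; [apply Rabs_pos| lra]. }
      assert (Rabs A1 * (eps / (2 * (Rabs A1 + 1))) <= eps / 2).
      { pose proof (Rabs_pos A1).
        apply Rmult_le_reg_r with (2 * (Rabs A1 + 1)); [lra|].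
        replace (Rabs A1 * (eps / (2 * (Rabs A1 + 1))) * (2 * (Rabs A1 + 1))) with (Rabs A1 * eps) by (field; lra).
        nra. }
      lra.
    - unfold t2.
      replace (phi_yy phi x0 y - A1 * phi_xy phi x0 y)
        with (dword (false :: false :: nil) phi x0 y - A1 * dword (false :: true :: nil) phi x0 y).
      + apply isd_combo.
        * exact (isd_y M phi HM HH (false :: nil) ltac:(simpl; lia) x0 y (sigma_int _ _ Hs)).
        * exact (isd_y M phi HM HH (true :: nil) ltac:(simpl; lia) x0 y (sigma_int _ _ Hs)).
      + pose proof (Schw M phi HM HH nil ltac:(simpl; lia) x0 y (sigma_int _ _ Hs)) as E.
        simpl in E |- *. unfold phi_yy, phi_xy. rewrite E. reflexivity. }
  replace ((1 - 1) ^ 2) with 0 by ring. rewrite Rplus_0_r, <- Rsqr_pow2, sqrt_Rsqr_abs.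
  rewrite Rmult_assoc.
  pose proof (bound_xx M phi HM HH x0 y Hs). pose proof (bound_xy M phi HM HH x0 y Hs).
  pose proof (bound_yy M phi HM HH x0 y Hs).
  pose proof (bound_xx M phi HM HH x1 y1 Hz1). pose proof (bound_xy M phi HM HH x1 y1 Hz1).
  pose proof (bound_yy M phi HM HH x1 y1 Hz1).
  unfold c5 in *.
  unfold A1, Afun, Hfun in *.
  apply final_alg with (pxx := phi_xx phi x0 y) (pxy := phi_xy phi x0 y) (pyy := phi_yy phi x0 y)
    (qxx := phi_xx phi x1 y1) (qxy := phi_xy phi x1 y1) (qyy := phi_yy phi x1 y1); try lra.
Qed.
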